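(* In the setting of the context, let $$SA(M)=-\frac12\sum_{i=1}^{2n}[M_i,M_{i+1}],\qquad SA(N)=-\frac12\sum_{i=1}^{2n}[N_{i-\frac12},N_{i+\frac12}]$$ be the signed areas of $M$ and $N$. Then $$SA(M)-SA(N)=\sum_{i=1}^{n}\beta_i^2\,[V_{i-\frac12},V_{i+\frac12}].$$
   Context: $[x,y]$ denotes the determinant of the matrix with columns $x,y\in\mathbb{R}^2$. Fix $n\ge2$; indices (integer and half-integer) are read modulo $2n$. $U$ is a convex $2n$-gon with distinct vertices $U_1,\dots,U_{2n}$ in counterclockwise order with $U_{i+n}=-U_i$, and $V_{i+\frac12}=(U_{i+1}-U_i)/[U_i,U_{i+1}]$. Let $c>0$ and let $P$ be a convex polygon with nonempty interior and vertex list $P_1,\dots,P_{2n}$ (consecutive entries may coincide) with $P_{i+1}-P_i$ a nonnegative multiple of $V_{i+\frac12}$ and $P_i-P_{i+n}=2cU_i$ for all $i$. The central equidistant $M$ has vertices $M_i=\frac12(P_i+P_{i+n})$; define $\alpha_{i+\frac12}$ by $M_{i+1}-M_i=\alpha_{i+\frac12}(U_{i+1}-U_i)$ and $\beta_i=\frac12\sum_{j=i}^{i+n-1}\alpha_{j+\frac12}[U_j,U_{j+1}]$. The involute $N$ of $M$ is the polygon with vertices $N_{i+\frac12}=M_i+\beta_iV_{i+\frac12}$, $1\le i\le 2n$. *)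

(* Defs.v *)
From HB Require Import structures.
From mathcomp Require Import all_boot all_order all_algebra.
Set Implicit Arguments. Unset Strict Implicit. Unset Printing Implicit Defensive.
Import Order.TTheory GRing.Theory Num.Theory.
Local Open Scope ring_scope.

Section Defs.
Variable R : realFieldType.
Notation pt := (R * R)%type.

Definition det2 (x y : pt) : R := x.1 * y.2 - x.2 * y.1.
Definition vadd (x y : pt) : pt := (x.1 + y.1, x.2 + y.2).
Definition vsub (x y : pt) : pt := (x.1 - y.1, x.2 - y.2).
Definition vscale (a : R) (x : pt) : pt := (a * x.1, a * x.2).

(* Indices are natural numbers read modulo 2n (sequences are 2n-periodic);
   a half-integer index i + 1/2 is represented by the natural number i. *)

Definition Vh (U : nat -> pt) (i : nat) : pt :=
  vscale (det2 (U i) (U i.+1))^-1 (vsub (U i.+1) (U i)).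

Definition Mc (n : nat) (P : nat -> pt) (i : nat) : pt :=
  vscale (2%:R)^-1 (vadd (P i) (P (i + n)%N)).

Definition beta (n : nat) (U : nat -> pt) (alpha : nat -> R) (i : nat) : R :=
  (2%:R)^-1 * \sum_(i <= j < i + n) alpha j * det2 (U j) (U j.+1).

Definition Ninv (n : nat) (U P : nat -> pt) (alpha : nat -> R) (i : nat) : pt :=
  vadd (Mc n P i) (vscale (beta n U alpha i) (Vh U i)).

Definition SA_M (n : nat) (P : nat -> pt) : R :=
  - (2%:R)^-1 * \sum_(1 <= i < (2 * n).+1) det2 (Mc n P i) (Mc n P i.+1).

Definition SA_N (n : nat) (U P : nat -> pt) (alpha : nat -> R) : R :=
  - (2%:R)^-1 * \sum_(1 <= i < (2 * n).+1)
      det2 (Ninv n U P alpha i.-1) (Ninv n U P alpha i).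

Definition ccw_convex_distinct (n : nat) (U : nat -> pt) : Prop :=
  (forall i j, U i = U j -> (i %% (2 * n) = j %% (2 * n))%N) /\
  (forall i j, (j %% (2 * n) != i %% (2 * n))%N ->
               (j %% (2 * n) != i.+1 %% (2 * n))%N ->
     0 < det2 (vsub (U i.+1) (U i)) (vsub (U j) (U i))).

(* P (vertex list P_1..P_{2n}, consecutive entries may coincide) is a convex
   polygon, counterclockwise: all vertices weakly to the left of each edge line. *)
Definition convex_poly (P : nat -> pt) : Prop :=
  forall i j, 0 <= det2 (vsub (P i.+1) (P i)) (vsub (P j) (P i)).

Definition nonempty_interior (P : nat -> pt) : Prop :=
  exists i j k, det2 (vsub (P j) (P i)) (vsub (P k) (P i)) != 0.

End Defs.

(* Main.v *)
Require Import Defs.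
From HB Require Import structures.
From mathcomp Require Import all_boot all_order all_algebra.
From mathcomp Require Import ring lra zify.
Import Order.TTheory GRing.Theory Num.Theory.
Local Open Scope ring_scope.

Lemma term_lem (R : realFieldType) (mp m0 m1 vp v0 : (R * R)%type) (bp b0 b1 : R) :
  m0 = vsub mp (vscale (b0 - bp) vp) ->
  m1 = vsub m0 (vscale (b1 - b0) v0) ->
  det2 m0 m1 - det2 (vadd mp (vscale bp vp)) (vadd m0 (vscale b0 v0))
  = - (b1 * det2 m1 v0 - b0 * det2 m0 vp) - b0 ^+ 2 * det2 vp v0.
Proof.
move=> -> ->; case: mp => x1 x2; case: vp => y1 y2; case: v0 => z1 z2.
rewrite /det2 /vsub /vadd /vscale /=; ring.
Qed.

Lemma e_aux (R : realFieldType) (u0 u1 : (R * R)%type) (a b : R) :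
  vscale a (vsub u1 u0) = vscale b (vsub (vscale (-1) u1) (vscale (-1) u0)) ->
  b * det2 (vscale (-1) u0) (vscale (-1) u1) = - (a * det2 u0 u1).
Proof.
move=> H; have := congr1 (det2 u0) H.
case: u0 {H} => x1 x2; case: u1 => y1 y2; rewrite /det2 /vsub /vscale /= => H.
have E1 : a * (x1 * y2 - x2 * y1) = x1 * (a * (y2 - x2)) - x2 * (a * (y1 - x1)) by ring.
have E2 : - b * (x1 * y2 - x2 * y1) = x1 * (b * (-1 * y2 - -1 * x2)) - x2 * (b * (-1 * y1 - -1 * x1)) by ring.
have E3 : b * (-1 * x1 * (-1 * y2) - -1 * x2 * (-1 * y1)) = b * (x1 * y2 - x2 * y1) by ring.
rewrite E3 E1 H -E2; ring.
Qed.

Lemma det_neg (R : realFieldType) (a b : (R * R)%type) :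
  det2 (vscale (-1) a) (vscale (-1) b) = det2 a b.
Proof. case: a => ? ?; case: b => ? ?; rewrite /det2 /vscale /=; ring. Qed.

Lemma vh_neg (R : realFieldType) (a b : (R * R)%type) :
  vscale (det2 (vscale (-1) a) (vscale (-1) b))^-1 (vsub (vscale (-1) b) (vscale (-1) a))
  = vscale (-1) (vscale (det2 a b)^-1 (vsub b a)).
Proof.
rewrite det_neg; case: a => ? ?; case: b => ? ?; rewrite /vscale /vsub /=.
congr pair; ring.
Qed.

Lemma mrel_aux (R : realFieldType) (x y vv : (R * R)%type) (a dd bb : R) :
  vsub x y = vscale a (vscale dd vv) -> bb = - (a * dd) ->
  x = vsub y (vscale bb vv).
Proof.
move=> H ->; case: x H => x1 x2; case: y => y1 y2; case: vv => v1 v2.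
rewrite /vsub /vscale /= => -[H1 H2]; congr pair.
  by transitivity (y1 + (x1 - y1)); [ring | rewrite H1; ring].
by transitivity (y2 + (x2 - y2)); [ring | rewrite H2; ring].
Qed.

Lemma vh_scale (R : realFieldType) (a b : (R * R)%type) :
  det2 a b != 0 -> vsub b a = vscale (det2 a b) (vscale (det2 a b)^-1 (vsub b a)).
Proof.
move=> nz; case: (vsub b a) => w1 w2; rewrite /vscale /=.
by rewrite !mulrA mulfV // !mul1r.
Qed.

Lemma dpos_aux (R : realFieldType) (a b : (R * R)%type) :
  det2 (vsub b a) (vsub (vscale (-1) a) a) = 2%:R * det2 a b.
Proof. case: a => ? ?; case: b => ? ?; rewrite /det2 /vscale /vsub /=; ring. Qed.

Theorem proposition4p2 (R : realFieldType) (n : nat) (U P : nat -> (R * R)%type)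
    (c : R) (alpha : nat -> R) :
  (2 <= n)%N ->
  (forall i, U (i + 2 * n)%N = U i) ->
  (forall i, U (i + n)%N = vscale (-1) (U i)) ->
  ccw_convex_distinct n U ->
  0 < c ->
  (forall i, P (i + 2 * n)%N = P i) ->
  convex_poly P ->
  nonempty_interior P ->
  (forall i, exists t : R, 0 <= t /\ vsub (P i.+1) (P i) = vscale t (Vh U i)) ->
  (forall i, vsub (P i) (P (i + n)%N) = vscale (2%:R * c) (U i)) ->
  (forall i, vsub (Mc n P i.+1) (Mc n P i) = vscale (alpha i) (vsub (U i.+1) (U i))) ->
  SA_M n P - SA_N n U P alpha =
    \sum_(1 <= i < n.+1) (beta n U alpha i) ^+ 2 * det2 (Vh U i.-1) (Vh U i).
Proof.
move=> n2 hU2 hUn [_ hccw] _ hP _ _ _ _ hM.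
set m := Mc n P; set b := beta n U alpha; set v := Vh U.
set d := fun i => det2 (U i) (U i.+1).
set e := fun j => alpha j * det2 (U j) (U j.+1).
have dpos : forall i, 0 < d i.
  move=> i; have := hccw i (i + n)%N.
  rewrite hUn dpos_aux pmulr_rgt0 ?ltr0n //; apply.
    rewrite -[X in _ != X %[mod _]]addn0 eqn_modDl modn_small ?mod0n; lia.
  rewrite -(addn1 i) eqn_modDl modn_small ?modn_small; lia.
have mper : forall i, m (i + n)%N = m i.
  move=> i; rewrite /m /Mc -addnA addnn -mul2n hP.
  congr vscale; case: (P i) => ? ?; case: (P (i + n)%N) => ? ?; rewrite /vadd /=; congr pair; exact: addrC.
have eper : forall i, e (i + n)%N = - e i.
  move=> i; have := hM (i + n)%N; rewrite -/m -addSn !mper -/m hM !hUn => H.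
  by rewrite /e -addSn !hUn; apply: e_aux.
have bper : forall i, b (i + n)%N = - b i.
  move=> i; rewrite /b /beta big_addn addnK -mulrN -sumrN.
  by congr (_ * _); apply: eq_bigr => j _; rewrite -/(e j) -eper.
have bdiff : forall i, b i.+1 = b i - e i.
  move=> i.
  have be : forall k, b k = (2%:R)^-1 * \sum_(k <= j < k + n) e j by [].
  have A1 : \sum_(i <= j < (i+n).+1) e j = e i + \sum_(i.+1 <= j < i.+1 + n) e j.
    by rewrite big_nat_recl ?leq_addr // big_add1 addSn.
  have A2 : \sum_(i <= j < (i+n).+1) e j = \sum_(i<=j<i+n) e j + e (i+n)%N.
    by rewrite big_nat_recr ?leq_addr.
  have S1 : \sum_(i.+1 <= j < i.+1 + n) e j = \sum_(i<=j<i+n) e j - e i - e i.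
    by apply: (addrI (e i)); rewrite -A1 A2 eper; ring.
  have h2 : (2%:R : R)^-1 * 2%:R = 1 by rewrite mulVf ?pnatr_eq0.
  rewrite !be S1; set x := (2%:R : R)^-1.
  by transitivity (x * \sum_(i<=j<i+n) e j - (x * 2%:R) * e i); [ring | rewrite h2 mul1r].
have mrel : forall i, m i.+1 = vsub (m i) (vscale (b i.+1 - b i) (v i)).
  move=> i; apply: (@mrel_aux _ _ _ _ (alpha i) (d i)).
    by rewrite /m hM /v /Vh -vh_scale // lt0r_neq0 // (dpos i).
  by rewrite bdiff /e /d /=; ring.
have vper : forall i, v (i + n)%N = vscale (-1) (v i).
  by move=> i; rewrite /v /Vh -addSn !hUn vh_neg.
set T := fun k => b k.+1 * det2 (m k.+1) (v k).
have key : forall i, det2 (m i.+1) (m i.+2) - det2 (Ninv n U P alpha i) (Ninv n U P alpha i.+1)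
   = - (T i.+1 - T i) - b i.+1 ^+ 2 * det2 (v i) (v i.+1).
  by move=> i; rewrite /Ninv -/m -/b -/v; apply: term_lem; apply: mrel.
set f := fun i => b i.+1 ^+ 2 * det2 (v i) (v i.+1).
have fper : forall i, f (i + n)%N = f i.
  by move=> i; rewrite /f -addSn bper !vper det_neg sqrrN.
have vv : forall k, vscale (-1) (vscale (-1) (v k)) = v k.
  by move=> k; case: (v k) => ? ?; rewrite /vscale /=; congr pair; ring.
have Tper : T (2 * n)%N = T 0%N.
  rewrite /T (_ : (2 * n).+1 = 1 + n + n)%N; last by lia.
  rewrite (_ : (2 * n) = 0 + n + n)%N; last by lia.
  by rewrite !bper !mper !vper vv opprK.
have dbl : \sum_(0 <= i < 2 * n) f i = 2%:R * \sum_(0 <= i < n) f i.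
  rewrite (big_cat_nat _ (n := n)) ?leq0n //; last by lia.
  have -> : \sum_(n <= i < 2 * n) f i = \sum_(0 <= i < n) f (i + n)%N.
    by rewrite -{1}(add0n n) big_addn (_ : 2 * n - n = n)%N; last by lia.
  by rewrite (eq_bigr _ (fun i _ => fper i)) mulr2n mulrDl mul1r.
have tot : \sum_(0 <= i < 2 * n) (det2 (m i.+1) (m i.+2) - det2 (Ninv n U P alpha i) (Ninv n U P alpha i.+1))
   = - (2%:R * \sum_(0 <= i < n) f i).
  rewrite (eq_bigr _ (fun i _ => key i)) big_split /= sumrN telescope_sumr ?leq0n //.
  by rewrite Tper subrr oppr0 add0r sumrN -dbl.
rewrite /SA_M /SA_N -/m !big_add1 /=.
rewrite -[X in _ = X]/(\sum_(0 <= i < n) f i).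
move: tot; rewrite sumrB => tot.
have h2 : (2%:R : R)^-1 * 2%:R = 1 by rewrite mulVf ?pnatr_eq0.
set A := \sum_(0 <= i < 2 * n) det2 (m i.+1) (m i.+2) in tot *.
set B := \sum_(0 <= i < 2 * n) det2 (Ninv n U P alpha i) (Ninv n U P alpha i.+1) in tot *.
transitivity (- (2%:R^-1 * (A - B))); first ring.
by rewrite tot mulrN opprK mulrA h2 mul1r.


Qed.
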